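(* Let $\mathcal{M}=((\{X_t\},X),\mathcal{A},\psi,\{Q_t\},(c,h),T)$ be an approximable MDP with terminal cost decomposition $h=h_1+h_2$, data $b,f_1,f_2$ and weight function $w$ as in the context, and let $J_t$ be its optimal cost-to-go functions. For $\lambda>0$ let $\tilde J_t^{\lambda}$ be the optimal cost-to-go functions of the $\lambda$-smoothed MDP $\tilde{\mathcal{M}}_\lambda$. Then for every $\theta>0$ there exists $\Lambda\in\mathbb{R}$ such that for all $\lambda>\Lambda$ and all $t\in\{0,\dots,T-1\}$, $$\sup_{x\in X_t}\big|\tilde J^{\lambda}_t(x)-J_t(x)\big|\le\big(\|J_T\|_w+\|\tilde J^{\lambda}_T\|_w\big)\,\theta .$$
   Context: A finite horizon MDP $\mathcal{M}=((\{X_t\}_{t},X),\mathcal{A},\psi,\{Q_t\}_t,(c,h),T)$ consists of: a state space $X$ with Borel subsets $X_t\subseteq X$ (state space at time $t$); a locally compact Borel space $\mathcal{A}$ of actions with metric $d_A$; a map $\psi$ assigning to each $x\in X$ a measurable set $\psi(x)\subseteq\mathcal{A}$ of feasible actions, with $\mathbb{K}_t=\{(x,a):x\in X_t,a\in\psi(x)\}$, $\mathbb{K}=\{(x,a):x\in X,a\in\psi(x)\}$ measurable; stochastic kernels $Q_t(\cdot\mid x,a)$, probability measures on $X_{t+1}$ measurable in $(x,a)$; a measurable stage cost $c:\mathbb{K}\to\mathbb{R}$; a measurable terminal cost $h:X\to\mathbb{R}$; a horizon $T\in\mathbb{N}$. Its optimal cost-to-go functions are $J_T=h$ on $X_T$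 and $J_t(x)=\inf_{a\in\psi(x)}\{c(x,a)+\int_{X_{t+1}}J_{t+1}(y)Q_t(dy\mid x,a)\}$ for $x\in X_t$, $t=T-1,\dots,0$. For $v:X\to\mathbb{R}$ set $\zeta_{v,t}(x,a)=\int_{X_{t+1}}v(y)Q_t(dy\mid x,a)$. For a positive function $w$, $\|v\|_w=\sup_x |v(x)|/w(x)$. The Hausdorff distance of sets is $d_H$. The MDP is approximable if: (1) $X=\mathbb{R}^m$ (Euclidean metric $d_X$); (2) $\psi(x)$ is compact for all $x$; (3) $d_H(\psi(x),\psi(y))\le L_\psi d_X(x,y)$ for some $L_\psi>0$; (4) $c$ is Lipschitz on $\mathbb{K}$ (constant $L_c$), and $h=h_1+h_2$ where $h_1$ is Lipschitz and $h_2(x)=f_1(x)$ if $x<b$ (componentwise), $h_2(x)=f_2(x)$ otherwise, for some $b\in\mathbb{R}^m$ and bounded Lipschitz $f_1,f_2$; and there are a positive lower semicontinuous $w:X\to\mathbb{R}$ and $\bar c>0$ with $|h_1(x)|+\|h_2\|_\infty+\sup_{a\in\psi(x)}|c(x,a)|\le\bar c\,w(x)$; (5) $\zeta_{w,t}$ is upper semicontinuous on $\mathbb{K}_t$ and $\zeta_{w,t}(x,a)\le\bar d\,w(x)$ on $\mathbb{K}_t$ for some $\bar d>0$; (6) for each bounded continuous $v$ and each $t$, $\zeta_{v,t}$ is continuous on $\mathbb{K}$; (7) there is $L_q>0$ such that for every $t$, all $(x,a),(y,a')\in\mathbb{K}_t$ and every Lipschitz $v$ with constant $L_v$, $|\zeta_{v,t}(x,a)-\zeta_{v,t}(y,a')|\le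 L_qL_v(d_X(x,y)+d_A(a,a'))$; (8) for every $\theta>0$ there is $\Lambda$ with $\sup_{x\in X,u\in\psi(x)}\int_{\mathcal{R}_{\lambda,b}}w(y)Q_{T-1}(dy\mid x,u)<\theta$ for all $\lambda>\Lambda$. Here $g_{\lambda,b}(x)=\prod_{i=1}^m g_i(x)$ with $g_i(x)=1$ if $x_i\le b_i-1/\lambda$, $g_i(x)=-\lambda(x_i-b_i)$ if $b_i-1/\lambda<x_i<b_i$, $g_i(x)=0$ if $x_i\ge b_i$, and $\mathcal{R}_{\lambda,b}=\{x: g_{\lambda,b}(x)\ne\mathbb{1}_{\{z:z<b\}}(x)\}$. The $\lambda$-smoothed MDP $\tilde{\mathcal{M}}_\lambda$ is $\mathcal{M}$ with terminal cost $h$ replaced by $h_1+\tilde h_\lambda$, where $\tilde h_\lambda=f_1g_{\lambda,b}+f_2(1-g_{\lambda,b})$. *)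

(* Defs.v *)
From HB Require Import structures.
From mathcomp Require Import all_boot all_order all_algebra.
From mathcomp Require Import all_classical all_reals all_analysis.
From mathcomp Require Import measurable_realfun.
Set Implicit Arguments. Unset Strict Implicit. Unset Printing Implicit Defensive.
Import Order.TTheory GRing.Theory Num.Theory.
Import numFieldNormedType.Exports.
Local Open Scope classical_set_scope.
Local Open Scope ring_scope.

Definition stateB (R : realType) (m : nat) :=
  g_sigma_algebraType (@open 'rV[R]_m).
Definition actB (R : realType) (A : pseudoPMetricType R) :=
  g_sigma_algebraType (@open A).

Definition dX (R : realType) (m : nat) (x y : 'rV[R]_m) : R :=
  Num.sqrt (\sum_(i < m) (x ord0 i - y ord0 i) ^+ 2).

Definition hausdorff_dist (R : realType) (A : Type) (dA : A -> A -> R)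
    (S1 S2 : set A) : \bar R :=
  maxe (ereal_sup [set ereal_inf [set (dA a b)%:E | b in S2] | a in S1])
       (ereal_sup [set ereal_inf [set (dA a b)%:E | a in S1] | b in S2]).

Definition usc_on (T : topologicalType) (R : realType) (D : set T)
    (f : T -> \bar R) : Prop :=
  forall p, D p -> forall r : R, (f p < r%:E)%E ->
    within D (nbhs p) [set q | (f q < r%:E)%E].

Definition vlt (R : realType) (m : nat) (x b : 'rV[R]_m) : Prop :=
  forall i : 'I_m, x ord0 i < b ord0 i.

Definition g_coord (R : realType) (lam bi xi : R) : R :=
  if xi <= bi - lam^-1 then 1 else if xi < bi then - lam * (xi - bi) else 0.
Definition g_lb (R : realType) (m : nat) (lam : R) (b x : 'rV[R]_m) : R :=
  \prod_(i < m) g_coord lam (b ord0 i) (x ord0 i).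
Definition ind_lt (R : realType) (m : nat) (b x : 'rV[R]_m) : R :=
  if `[< vlt x b >] then 1 else 0.
Definition Rset (R : realType) (m : nat) (lam : R) (b : 'rV[R]_m) : set 'rV[R]_m :=
  [set x | g_lb lam b x <> ind_lt b x].

Definition h2fun (R : realType) (m : nat) (b : 'rV[R]_m) (f1 f2 : 'rV[R]_m -> R)
  (x : 'rV[R]_m) : R := if `[< vlt x b >] then f1 x else f2 x.
Definition htilde (R : realType) (m : nat) (lam : R) (b : 'rV[R]_m)
  (f1 f2 : 'rV[R]_m -> R) (x : 'rV[R]_m) : R :=
  f1 x * g_lb lam b x + f2 x * (1 - g_lb lam b x).

(* Optimal cost-to-go functions J_t, t = 0..T, of a finite-horizon MDP with
   state sets Xs, feasible actions psi, kernels Q, stage cost c,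
   terminal cost h and horizon T.  aux k = J_{T-k}. *)
Section CostToGo.
Variables (R : realType) (m : nat) (A : pseudoPMetricType R).
Variables (Xs : nat -> set 'rV[R]_m) (psi : 'rV[R]_m -> set A)
  (Q : nat -> 'rV[R]_m -> A -> probability (stateB R m) R)
  (c : 'rV[R]_m -> A -> R) (h : 'rV[R]_m -> R) (T : nat).

Fixpoint ctg_aux (k : nat) : 'rV[R]_m -> \bar R :=
  match k with
  | 0 => fun x => (h x)%:E
  | k'.+1 => fun x => ereal_inf [set ((c x a)%:E +
        \int[Q (T - k'.+1) x a]_(y in Xs (T - k')) ctg_aux k' y)%E | a in psi x]
  end.

Definition cost_to_go (t : nat) : 'rV[R]_m -> \bar R := ctg_aux (T - t).
End CostToGo.

Definition wnorm (R : realType) (m : nat) (w : 'rV[R]_m -> R)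
  (v : 'rV[R]_m -> \bar R) : \bar R :=
  ereal_sup (range (fun x => (`|v x| * ((w x)^-1)%:E)%E)).

Definition zeta (R : realType) (m : nat) (A : Type) (Xs : nat -> set 'rV[R]_m)
  (Q : nat -> 'rV[R]_m -> A -> probability (stateB R m) R)
  (v : 'rV[R]_m -> R) (t : nat) (x : 'rV[R]_m) (a : A) : \bar R :=
  (\int[Q t x a]_(y in Xs t.+1) (v y)%:E)%E.

(* Main.v *)
Require Import Defs.
From HB Require Import structures.
From mathcomp Require Import all_boot all_order all_algebra.
From mathcomp Require Import all_classical all_reals all_analysis.
From mathcomp Require Import measurable_realfun.
From mathcomp Require Import lra zify.
Import Order.TTheory GRing.Theory Num.Theory.
Import numFieldNormedType.Exports.
Local Open Scope classical_set_scope.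
Local Open Scope ring_scope.

Section pw.
Local Open Scope ereal_scope.
Context (R : realType).
Lemma pw (f g : \bar R) (s r e : R) : (0 <= s)%R -> (0 <= r)%R -> (0 <= e)%R ->
  s%:E <= maxe f 0 -> r%:E <= maxe (- g) 0 -> f <= g + e%:E ->
  [/\ (Num.max (s - e) 0)%:E <= maxe g 0, (Num.max (r - e) 0)%:E <= maxe (-f) 0 &
      (s + r <= Num.max (s - e) 0 + Num.max (r - e) 0 + e)%R].
Proof.
move=> s0 r0 e0 hs hr hfg; rewrite le_max lee_fin in hs; rewrite le_max lee_fin in hr.
move/orP: hs => hs; move/orP: hr => hr.
have m1a : (s - e <= Num.max (s - e) 0)%R by rewrite le_max lexx.
have m1b : (0 <= Num.max (s - e) 0)%R by rewrite le_max lexx orbT.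
have m2a : (r - e <= Num.max (r - e) 0)%R by rewrite le_max lexx.
have m2b : (0 <= Num.max (r - e) 0)%R by rewrite le_max lexx orbT.
split.
- rewrite le_max; have [se|se] := lerP (s - e) 0.
    by rewrite lexx orbT.
  apply/orP; left; case: hs => [hs|hs]; last by exfalso; lra.
  by rewrite EFinB leeBlDr // (le_trans hs hfg).
- rewrite le_max; have [se|se] := lerP (r - e) 0.
    by rewrite lexx orbT.
  apply/orP; left; case: hr => [hr|hr]; last by exfalso; lra.
  rewrite leeNr in hr.
  have : f <= (e - r)%:E by rewrite (le_trans hfg)// EFinB addeC leeD2r.
  by rewrite -leeN2 -EFinN opprB.
- case: hs => [hs|hs]; last lra.
  case: hr => [hr|hr]; last lra.
  rewrite leeNr in hr.
  have : s%:E <= (e - r)%:E.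
    by rewrite (le_trans hs) // (le_trans hfg)// EFinB addeC leeD2r.
  rewrite lee_fin => ?; lra.
Qed.

Lemma sup_add (S : set (\bar R)) (b c : \bar R) : S 0 -> 0 <= b ->
  (forall x, S x -> x + b <= c) -> ereal_sup S + b <= c.
Proof.
move=> S0; case: b => [b| |] b0 h //.
- rewrite -leeBrDr //; apply: ge_ereal_sup => x Sx; rewrite leeBrDr //; exact: h.
- have := h 0 S0; rewrite add0e leye_eq => /eqP ->; exact: leey.
Qed.
Lemma inf_shift (A : Type) (P : set A) (f g : A -> \bar R) (e : R) :
  (forall a, P a -> f a <= g a + e%:E) ->
  ereal_inf (f @` P) <= ereal_inf (g @` P) + e%:E.
Proof.
move=> h; rewrite -leeBlDr //; apply: le_ereal_inf_tmp => _ [a Pa <-].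
rewrite leeBlDr //; apply: le_trans (h a Pa).
by apply: ereal_inf_lbound; exists a.
Qed.

Lemma abse_bound (x : \bar R) (B : R) : (- B)%:E <= x -> x <= B%:E -> `|x| <= B%:E.
Proof.
move=> h1 h2.
have fx : x \is a fin_num.
  by rewrite fin_numElt (lt_le_trans _ h1) ?ltNyr // (le_lt_trans h2) ?ltry.
move: h1 h2; rewrite -(fineK fx) abse_EFin !lee_fin => *.
by rewrite ler_norml; apply/andP; split.
Qed.

Lemma inf_bound (A : Type) (P : set A) (f : A -> \bar R) (B : R) :
  P !=set0 -> (forall a, P a -> `|f a| <= B%:E) ->
  `|ereal_inf (f @` P)| <= B%:E.
Proof.
move=> [a0 Pa0] h; apply: abse_bound.
  apply: le_ereal_inf_tmp => _ [a Pa <-].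
  by rewrite EFinN leeNl (le_trans _ (h a Pa)) // -abseN lee_abs.
apply: le_trans (h a0 Pa0); apply: le_trans (lee_abs _).
by apply: ereal_inf_lbound; exists a0.
Qed.

Lemma ac4 (a b c e : \bar R) : a + b + c - e = a - e + c + b.
Proof. rewrite addeAC -[a + b + _]addeA (addeC b) addeA; by rewrite addeAC. Qed.
End pw.

Section gen.
Local Open Scope ereal_scope.
Context d (T : measurableType d) (R : realType).
Variable mu : {measure set T -> \bar R}.

Lemma le_nnint (D : set T) (f g : T -> \bar R) :
  (forall x, D x -> 0 <= f x) -> (forall x, D x -> f x <= g x) ->
  \int[mu]_(x in D) f x <= \int[mu]_(x in D) g x.
Proof.
move=> f0 fg; rewrite !ge0_integralE //; last first.
  by move=> x Dx; exact: le_trans (f0 x Dx) (fg x Dx).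
apply: le_ereal_sup => _ [h hf <-]; exists h => // x.
apply: le_trans (hf x) _; rewrite /patch; case: ifP => // /[!inE] Dx.
exact: fg.
Qed.

Import HBNNSimple.

Lemma key_glob (F G : T -> \bar R) (E : T -> R) :
  measurable_fun setT E -> (forall x, 0 <= E x)%R ->
  (forall x, F x <= G x + (E x)%:E) ->
  \int[mu]_x F^\+ x + \int[mu]_x G^\- x <=
  \int[mu]_x G^\+ x + \int[mu]_x F^\- x + \int[mu]_x (E x)%:E.
Proof.
move=> mE E0 FGE.
rewrite [X in X + _]ge0_integralTE; last by move=> x; exact: funepos_ge0.
apply: sup_add.
- by exists nnsfun0; [move=> x /=; exact: funepos_ge0 | exact: sintegral0].
- by apply: integral_ge0 => x _; exact: funeneg_ge0.
move=> _ [s hs <-]; rewrite [X in X <= _]addeC.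
rewrite ge0_integralTE; last by move=> x; exact: funeneg_ge0.
apply: sup_add.
- by exists nnsfun0; [move=> x /=; exact: funeneg_ge0 | exact: sintegral0].
- exact: sintegral_ge0.
move=> _ [r hr <-].
rewrite -!integralT_nnsfun.
have hs' x : (s x)%:E <= maxe (F x) 0 by rewrite -funeposE; exact: hs.
have hr' x : (r x)%:E <= maxe (- G x) 0 by rewrite -funenegE; exact: hr.
have hpw x := @pw R (F x) (G x) (s x) (r x) (E x) (@fun_ge0 _ _ s x) (@fun_ge0 _ _ r x) (E0 x) (hs' x) (hr' x) (FGE x).
have ms : measurable_fun setT (fun x => (s x)%:E) by apply/measurable_EFinP.
have mr : measurable_fun setT (fun x => (r x)%:E) by apply/measurable_EFinP.
have mu' : measurable_fun setT (fun x => (Num.max (s x - E x) 0)%:E).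
  apply/measurable_EFinP; apply: measurable_maxr => //.
  exact: measurable_funB.
have mv' : measurable_fun setT (fun x => (Num.max (r x - E x) 0)%:E).
  apply/measurable_EFinP; apply: measurable_maxr => //.
  exact: measurable_funB.
have mE' : measurable_fun setT (fun x => (E x)%:E) by apply/measurable_EFinP.
have u0 x : 0 <= (Num.max (s x - E x) 0)%:E by rewrite lee_fin le_max lexx orbT.
have v0 x : 0 <= (Num.max (r x - E x) 0)%:E by rewrite lee_fin le_max lexx orbT.
rewrite -(@ge0_integralD _ _ _ mu setT measurableT (fun x => (r x)%:E)
  (fun x => (s x)%:E)) //; try by move=> x _; rewrite lee_fin.
apply: (@le_trans _ _ (\int[mu]_x ((Num.max (s x - E x) 0)%:E +
   (Num.max (r x - E x) 0)%:E + (E x)%:E))).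
  apply: ge0_le_integral => //.
  - by move=> x _; rewrite adde_ge0 // lee_fin.
  - exact: emeasurable_funD.
  - by apply: emeasurable_funD => //; exact: emeasurable_funD.
  - move=> x _; have [_ _ h3] := hpw x; move: h3.
    by rewrite -!EFinD lee_fin [in X in X -> _]addrC.
rewrite (@ge0_integralD _ _ _ mu setT measurableT
  (fun x => (Num.max (s x - E x) 0)%:E + (Num.max (r x - E x) 0)%:E)
  (fun x => (E x)%:E)) //; last 3 first.
- by move=> x _; rewrite adde_ge0.
- exact: emeasurable_funD.
- by move=> x _; rewrite lee_fin.
rewrite (@ge0_integralD _ _ _ mu setT measurableT
  (fun x => (Num.max (s x - E x) 0)%:E) (fun x => (Num.max (r x - E x) 0)%:E)) //.
apply: leeD => //; apply: leeD; apply: le_nnint => // x _;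
  by rewrite ?funeposE ?funenegE; have [] := hpw x.
Qed.

Lemma key_dom (D : set T) (mD : measurable D) (F G : T -> \bar R) (E : T -> R) :
  measurable_fun D E -> (forall x, D x -> 0 <= E x)%R ->
  (forall x, D x -> F x <= G x + (E x)%:E) ->
  \int[mu]_(x in D) F^\- x \is a fin_num ->
  \int[mu]_(x in D) G^\- x \is a fin_num ->
  \int[mu]_(x in D) F x <= \int[mu]_(x in D) G x + \int[mu]_(x in D) (E x)%:E.
Proof.
move=> mE E0 FGE fF fG.
have := @key_glob (F \_ D) (G \_ D) (E \_ D).
rewrite !funepos_restrict !funeneg_restrict -!integral_mkcond.
have -> : \int[mu]_x ((E \_ D) x)%:E = \int[mu]_(x in D) (E x)%:E.
  rewrite [RHS]integral_mkcond; apply: eq_integral => x _.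
  by rewrite /patch; case: ifP.
move=> /(_ _ _ _) h.
have {h} h : \int[mu]_(x in D) F^\+ x + \int[mu]_(x in D) G^\- x <=
  \int[mu]_(x in D) G^\+ x + \int[mu]_(x in D) F^\- x + \int[mu]_(x in D) (E x)%:E.
  apply: h.
  - exact/(measurable_restrictT _ _).1.
  - by move=> x; rewrite /patch; case: ifP => // /[!inE] /E0.
  - move=> x; rewrite /patch; case: ifP => [/[!inE] /FGE //|_].
    by rewrite add0e.
rewrite (integralE mu D F) (integralE mu D G) leeBlDr //.
rewrite -leeBrDr // in h.
apply: (le_trans h); rewrite le_eqVlt; apply/orP; left; apply/eqP.
by rewrite ac4.
Qed.

Lemma ib (D : set T) (mD : measurable D) (F : T -> \bar R) (w : T -> R) (M W : R) :
  measurable_fun D w -> (0 <= M)%R -> (forall x, D x -> 0 <= w x)%R ->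
  (forall x, D x -> `|F x| <= (M * w x)%:E) ->
  \int[mu]_(x in D) (w x)%:E <= W%:E ->
  [/\ \int[mu]_(x in D) F^\- x \is a fin_num,
      \int[mu]_(x in D) F x \is a fin_num &
      `|\int[mu]_(x in D) F x| <= (M * W)%:E].
Proof.
move=> mw M0 w0 FM hW.
have mMw : \int[mu]_(x in D) ((M * w x)%:E) <= (M * W)%:E.
  under eq_integral do rewrite EFinM.
  rewrite ge0_integralZl_EFin //.
  - by rewrite EFinM; apply: lee_wpmul2l; rewrite // lee_fin.
  - exact/measurable_EFinP.
have hp : \int[mu]_(x in D) F^\+ x <= (M * W)%:E.
  apply: le_trans mMw; apply: le_nnint => x Dx; first exact: funepos_ge0.
  rewrite funeposE ge_max (le_trans _ (FM x Dx)) ?lee_abs //=.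
  by rewrite (le_trans _ (FM x Dx)) // abse_ge0.
have hn : \int[mu]_(x in D) F^\- x <= (M * W)%:E.
  apply: le_trans mMw; apply: le_nnint => x Dx; first exact: funeneg_ge0.
  rewrite funenegE ge_max (le_trans _ (FM x Dx)) ?lee_abs //=.
    by rewrite (le_trans _ (FM x Dx)) // abse_ge0.
  by rewrite -abseN lee_abs.
have p0 : 0 <= \int[mu]_(x in D) F^\+ x.
  by apply: integral_ge0 => x _; exact: funepos_ge0.
have n0 : 0 <= \int[mu]_(x in D) F^\- x.
  by apply: integral_ge0 => x _; exact: funeneg_ge0.
have fp : \int[mu]_(x in D) F^\+ x \is a fin_num.
  by rewrite ge0_fin_numE // (le_lt_trans hp) // ltry.
have fn : \int[mu]_(x in D) F^\- x \is a fin_num.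
  by rewrite ge0_fin_numE // (le_lt_trans hn) // ltry.
rewrite (integralE mu D F); split => //; first by rewrite fin_numB fp fn.
move: p0 n0 hp hn; rewrite -(fineK fp) -(fineK fn) !lee_fin.
move=> *; rewrite ler_norml; apply/andP; split; lra.
Qed.
End gen.


Lemma meas_open (R : realType) (m : nat) (A : set 'rV[R]_m) :
  open A -> measurable (A : set (stateB R m)).
Proof. by move=> oA; apply: sub_sigma_algebra. Qed.

Lemma meas_coord_lt (R : realType) (m : nat) (i : 'I_m) (c : R) :
  measurable ([set x : 'rV[R]_m | x ord0 i < c] : set (stateB R m)).
Proof.
apply: meas_open.
have := (continuousP (fun x : 'rV[R]_m => x ord0 i)).1 (@coord_continuous R 1 m ord0 i) _ (@open_lt _ c).
by [].
Qed.

Lemma meas_coord_gt (R : realType) (m : nat) (i : 'I_m) (c : R) :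
  measurable ([set x : 'rV[R]_m | c < x ord0 i] : set (stateB R m)).
Proof.
apply: meas_open.
have := (continuousP (fun x : 'rV[R]_m => x ord0 i)).1 (@coord_continuous R 1 m ord0 i) _ (@open_gt _ c).
by [].
Qed.

Lemma w_meas (R : realType) (m : nat) (w : 'rV[R]_m -> R) :
  lower_semicontinuous (fun x => (w x)%:E) ->
  measurable_fun setT (w : stateB R m -> R).
Proof.
move=> lw; apply/measurable_EFinP.
apply: (measurability _ (ErealGenOInfty.measurableE R)).
move=> /= _ [_ [a ->]] <-; apply: measurableI => //; apply: meas_open.
by rewrite preimage_itvoy; move/lower_semicontinuousP : lw; exact.
Qed.

Lemma gc01 {R : realType} (lam bi xi : R) : 0 < lam ->
  0 <= g_coord lam bi xi <= 1.
Proof.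
move=> l0; rewrite /g_coord.
have li : lam * lam^-1 = 1 by rewrite mulfV // gt_eqF.
case: ifP => h1; first by rewrite ler01 lexx.
case: ifP => h2; last by rewrite lexx ler01.
move/negbT: h1; rewrite -ltNge => h1.
apply/andP; split; nra.
Qed.

Lemma Rset_char (R : realType) (m : nat) (lam : R) (b x : 'rV[R]_m) : 0 < lam ->
  Rset lam b x <-> (vlt x b /\ exists i, b ord0 i - lam^-1 < x ord0 i).
Proof.
move=> l0; rewrite /Rset /= /ind_lt.
have li : lam * lam^-1 = 1 by rewrite mulfV // gt_eqF.
case: (pselect (vlt x b)) => hv.
- rewrite (asboolT hv); split.
  + move=> hg; split => //; apply: contrapT => hn; apply: hg.
    rewrite /g_lb big1 // => i _; rewrite /g_coord ifT //.
    by rewrite leNgt; apply/negP => hi; apply: hn; exists i.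
  + move=> [_ [i hi]] hg1; move: hg1; rewrite /g_lb (bigD1 i) //=.
    set rest := (X in _ * X).
    have r01 : 0 <= rest <= 1.
      apply/andP; split.
        by apply: prodr_ge0 => j _; have /andP[] := gc01 lam (b ord0 j) (x ord0 j) l0.
      by apply: prodr_ile1 => j _; exact: gc01.
    have : g_coord lam (b ord0 i) (x ord0 i) < 1.
      rewrite /g_coord ifF; last by apply/negbTE; rewrite -ltNge.
      rewrite ifT; last exact: hv.
      nra.
    have := gc01 lam (b ord0 i) (x ord0 i) l0.
    move: r01; set g := g_coord _ _ _ => /andP[r0 r1] /andP[g0 g1] gl1 hg.
    nra.
- rewrite (asboolF hv); split; last by case.
  move=> hg; exfalso; apply: hg.
  have [i hi] : exists i, b ord0 i <= x ord0 i.
    apply: contrapT => hn; apply: hv => i.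
    by rewrite ltNge; apply/negP => hi; apply: hn; exists i.
  rewrite /g_lb (bigD1 i) //= /g_coord ifF; last first.
    apply/negbTE; rewrite -ltNge; apply: (lt_le_trans _ hi).
    by rewrite ltrBlDr ltrDl invr_gt0.
  by rewrite ifF ?mul0r //; apply/negbTE; rewrite -leNgt.
Qed.

Lemma Rset_meas (R : realType) (m : nat) (lam : R) (b : 'rV[R]_m) : 0 < lam ->
  measurable (Rset lam b : set (stateB R m)).
Proof.
move=> l0.
have -> : Rset lam b = (\bigcap_(i in [set: 'I_m]) [set x : 'rV[R]_m | x ord0 i < b ord0 i])
   `&` (\bigcup_(i in [set: 'I_m]) [set x : 'rV[R]_m | b ord0 i - lam^-1 < x ord0 i]).
  apply/seteqP; split => x.
    by move=> /(@Rset_char R m lam b x l0) [hv [i hi]]; split; [move=> j _; exact: hv| exists i].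
  move=> [hv [i _ hi]]; apply/(@Rset_char R m lam b x l0); split; last by exists i.
  by move=> j; exact: hv.
apply: measurableI.
  by apply: fin_bigcap_measurable; [exact: finite_finset| move=> i _; exact: meas_coord_lt].
by apply: fin_bigcup_measurable; [exact: finite_finset| move=> i _; exact: meas_coord_gt].
Qed.

Section ctg.
Local Open Scope ereal_scope.

Lemma absdiff (R : realType) (x y : \bar R) (e : R) : x \is a fin_num -> y \is a fin_num ->
  x <= y + e%:E -> y <= x + e%:E -> `|x - y| <= e%:E.
Proof.
move=> fx fy; rewrite -(fineK fx) -(fineK fy) -EFinB -!EFinD !lee_fin.
by move=> *; rewrite ler_norml; apply/andP; split; lra.
Qed.

Lemma ctg_bound (R : realType) (m : nat) (A : pseudoPMetricType R)
  (Xs : nat -> set 'rV[R]_m) (hXs : forall t, measurable (Xs t : set (stateB R m)))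
  (psi : 'rV[R]_m -> set A) (hpsi_ne : forall x, psi x !=set0) (T : nat)
  (Q : nat -> 'rV[R]_m -> A -> probability (stateB R m) R)
  (c : 'rV[R]_m -> A -> R) (w : 'rV[R]_m -> R) (hw_pos : forall x, (0 < w x)%R)
  (mw : measurable_fun setT (w : stateB R m -> R))
  (cbar dbar : R) (hcbar : (0 <= cbar)%R) (hdbar : (0 <= dbar)%R)
  (hc : forall x a, psi x a -> (`|c x a| <= cbar * w x)%R)
  (hzw_bd : forall t x a, (t < T)%N -> Xs t x -> psi x a ->
     zeta Xs Q w t x a <= (dbar * w x)%:E)
  (hh : 'rV[R]_m -> R) (M0 : R) (hM0 : (0 <= M0)%R)
  (hhb : forall y, (`|hh y| <= M0 * w y)%R) :
  forall k, (k <= T)%N -> exists M, (0 <= M)%R /\ forall x,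
    (k == 0)%N || `[< Xs (T - k)%N x >] ->
    `|ctg_aux Xs psi Q c hh T k x| <= (M * w x)%:E.
Proof.
elim=> [|k IH] kT.
  by exists M0; split => // x _ /=; rewrite lee_fin.
have [M [M0' hM]] := IH (ltnW kT).
exists (cbar + M * dbar)%R; split; first by rewrite addr_ge0 // mulr_ge0.
move=> x /orP [//|/asboolP hx] /=.
apply: inf_bound => // a pa.
have tT : (T - k.+1 < T)%N by lia.
have eS : ((T - k.+1).+1 = T - k)%N by lia.
have hW := hzw_bd _ _ _ tT hx pa; rewrite /zeta eS in hW.
have [_ _ hI] := @ib _ _ _ (Q (T - k.+1)%N x a) (Xs (T - k)%N) (hXs _)
  (ctg_aux Xs psi Q c hh T k) w M (dbar * w x)
  (measurable_funS measurableT (subsetT _) mw) M0'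
  (fun y _ => ltW (hw_pos y)) (fun y hy => hM y (introT orP (or_intror (asboolT hy)))) hW.
apply: le_trans (lee_abs_add _ _) _.
rewrite mulrDl EFinD; apply: leeD; first by rewrite abse_EFin lee_fin hc.
by rewrite -mulrA.
Qed.

Lemma ctg_step (R : realType) (m : nat) (A : pseudoPMetricType R)
  (Xs : nat -> set 'rV[R]_m) (hXs : forall t, measurable (Xs t : set (stateB R m)))
  (psi : 'rV[R]_m -> set A) (hpsi_ne : forall x, psi x !=set0) (T : nat)
  (Q : nat -> 'rV[R]_m -> A -> probability (stateB R m) R)
  (c : 'rV[R]_m -> A -> R) (w : 'rV[R]_m -> R) (hw_pos : forall x, (0 < w x)%R)
  (mw : measurable_fun setT (w : stateB R m -> R))
  (cbar dbar : R) (hcbar : (0 <= cbar)%R) (hdbar : (0 <= dbar)%R)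
  (hc : forall x a, psi x a -> (`|c x a| <= cbar * w x)%R)
  (hzw_bd : forall t x a, (t < T)%N -> Xs t x -> psi x a ->
     zeta Xs Q w t x a <= (dbar * w x)%:E)
  (hh hl : 'rV[R]_m -> R) (M0 : R) (hM0 : (0 <= M0)%R)
  (hhb : forall y, (`|hh y| <= M0 * w y)%R)
  (hlb : forall y, (`|hl y| <= M0 * w y)%R)
  (k : nat) (kT : (k < T)%N) (E : 'rV[R]_m -> R)
  (mE : measurable_fun (Xs (T - k)%N : set (stateB R m)) E)
  (E0 : forall y, (0 <= E y)%R) (dl : R)
  (hFG : forall y, Xs (T - k)%N y ->
     ctg_aux Xs psi Q c hh T k y <= ctg_aux Xs psi Q c hl T k y + (E y)%:E)
  (hGF : forall y, Xs (T - k)%N y ->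
     ctg_aux Xs psi Q c hl T k y <= ctg_aux Xs psi Q c hh T k y + (E y)%:E)
  (hint : forall x a, Xs (T - k.+1)%N x -> psi x a ->
     \int[Q (T - k.+1)%N x a]_(y in Xs (T - k)%N) (E y)%:E <= dl%:E) :
  forall x, Xs (T - k.+1)%N x ->
  `|ctg_aux Xs psi Q c hl T k.+1 x - ctg_aux Xs psi Q c hh T k.+1 x| <= dl%:E.
Proof.
move=> x hx.
have cb := @ctg_bound R m A Xs hXs psi hpsi_ne T Q c w hw_pos mw cbar dbar hcbar hdbar hc hzw_bd.
have [Mh [Mh0 bh]] := cb hh M0 hM0 hhb k (ltnW kT).
have [Ml [Ml0 bl]] := cb hl M0 hM0 hlb k (ltnW kT).
have [Mh' [_ bh']] := cb hh M0 hM0 hhb k.+1 kT.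
have [Ml' [_ bl']] := cb hl M0 hM0 hlb k.+1 kT.
have hxk : (k.+1 == 0)%N || `[< Xs (T - k.+1)%N x >] by apply/orP; right; exact/asboolP.
have tT : (T - k.+1 < T)%N by lia.
have eS : ((T - k.+1).+1 = T - k)%N by lia.
have gen : forall (F G : 'rV[R]_m -> \bar R) (MF MG : R), (0 <= MF)%R -> (0 <= MG)%R ->
    (forall y, Xs (T - k)%N y -> `|F y| <= (MF * w y)%:E) ->
    (forall y, Xs (T - k)%N y -> `|G y| <= (MG * w y)%:E) ->
    (forall y, Xs (T - k)%N y -> F y <= G y + (E y)%:E) ->
    forall a, psi x a ->
    (c x a)%:E + \int[Q (T - k.+1)%N x a]_(y in Xs (T - k)%N) F y <=
    (c x a)%:E + \int[Q (T - k.+1)%N x a]_(y in Xs (T - k)%N) G y + dl%:E.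
  move=> F G MF MG MF0 MG0 bF bG FG a pa.
  have hW := hzw_bd _ _ _ tT hx pa; rewrite /zeta eS in hW.
  have mwS : measurable_fun (Xs (T - k)%N : set (stateB R m)) w := measurable_funS measurableT (subsetT _) mw.
  have [fF _ _] := @ib _ _ _ (Q (T - k.+1)%N x a) (Xs (T - k)%N) (hXs _)
    F w MF (dbar * w x) mwS MF0 (fun y _ => ltW (hw_pos y)) bF hW.
  have [fG _ _] := @ib _ _ _ (Q (T - k.+1)%N x a) (Xs (T - k)%N) (hXs _)
    G w MG (dbar * w x) mwS MG0 (fun y _ => ltW (hw_pos y)) bG hW.
  rewrite -addeA leeD2l //.
  apply: le_trans (@key_dom _ _ _ (Q (T - k.+1)%N x a) (Xs (T - k)%N) (hXs _) F G E mE (fun y _ => E0 y) FG fF fG) _.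
  by apply: leeD2l; exact: hint.
have bhk y (hy : Xs (T - k)%N y) := bh y (introT orP (or_intror (asboolT hy))).
have blk y (hy : Xs (T - k)%N y) := bl y (introT orP (or_intror (asboolT hy))).
apply: absdiff.
- by rewrite fin_num_abs (le_lt_trans (bl' x hxk)) ?ltry.
- by rewrite fin_num_abs (le_lt_trans (bh' x hxk)) ?ltry.
- by apply: inf_shift => a pa; exact: (gen _ _ _ _ Ml0 Mh0 blk bhk hGF).
- by apply: inf_shift => a pa; exact: (gen _ _ _ _ Mh0 Ml0 bhk blk hFG).
Qed.

Lemma absdiff_inv (R : realType) (x y : \bar R) (e : R) : x \is a fin_num -> y \is a fin_num ->
  `|x - y| <= e%:E -> x <= y + e%:E /\ y <= x + e%:E.
Proof.
move=> fx fy; rewrite -(fineK fx) -(fineK fy) -EFinB -!EFinD !lee_fin.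
by rewrite ler_norml => /andP[? ?]; split; lra.
Qed.
End ctg.

Theorem proposition4 (R : realType) (m : nat)
  (* action space: locally compact Borel space with metric dA *)
  (A : pseudoPMetricType R) (dA : A -> A -> R)
  (hdA_ball : forall (a : A) (e : R), 0 < e -> ball a e = [set b | dA a b < e])
  (hdA_sep : forall a b : A, dA a b = 0 <-> a = b)
  (hdA_sym : forall a b : A, dA a b = dA b a)
  (hdA_tri : forall a b e : A, dA a e <= dA a b + dA b e)
  (hA_lc : locally_compact [set: A])
  (hA_sepb : exists D : set A, countable D /\ closure D = [set: A])
  (* state sets, feasible actions, kernels, costs, horizon *)
  (Xs : nat -> set 'rV[R]_m)
  (hXs : forall t, measurable (Xs t : set (stateB R m)))
  (psi : 'rV[R]_m -> set A)
  (hpsi_meas : forall x, measurable (psi x : set (actB A)))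
  (hpsi_ne : forall x, psi x !=set0)
  (hK_meas : measurable ([set p | psi p.1 p.2] : set (stateB R m * actB A)))
  (hKt_meas : forall t,
     measurable ([set p | Xs t p.1 /\ psi p.1 p.2] : set (stateB R m * actB A)))
  (T : nat)
  (Q : nat -> 'rV[R]_m -> A -> probability (stateB R m) R)
  (hQ_supp : forall t x a, (t < T)%N -> Q t x a (Xs t.+1) = 1%E)
  (hQ_meas : forall t (U : set (stateB R m)), (t < T)%N -> measurable U ->
     measurable_fun ([set p | Xs t p.1 /\ psi p.1 p.2] : set (stateB R m * actB A))
       (fun p : stateB R m * actB A => Q t p.1 p.2 U))
  (c : 'rV[R]_m -> A -> R)
  (hc_meas : measurable_fun ([set p | psi p.1 p.2] : set (stateB R m * actB A))
       (fun p : stateB R m * actB A => c p.1 p.2))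
  (h1 f1 f2 : 'rV[R]_m -> R) (b : 'rV[R]_m) (w : 'rV[R]_m -> R)
  (* (2) *)
  (hpsi_cpt : forall x, compact (psi x))
  (* (3) *)
  (Lpsi : R) (hLpsi : 0 < Lpsi)
  (hpsi_lip : forall x y,
     (hausdorff_dist dA (psi x) (psi y) <= (Lpsi * dX x y)%:E)%E)
  (* (4) *)
  (Lc : R)
  (hc_lip : forall x a y a', psi x a -> psi y a' ->
     `|c x a - c y a'| <= Lc * (dX x y + dA a a'))
  (hh1_lip : exists L1 : R, forall x y, `|h1 x - h1 y| <= L1 * dX x y)
  (hf1_bd : exists M : R, forall x, `|f1 x| <= M)
  (hf2_bd : exists M : R, forall x, `|f2 x| <= M)
  (hf1_lip : exists L : R, forall x y, `|f1 x - f1 y| <= L * dX x y)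
  (hf2_lip : exists L : R, forall x y, `|f2 x - f2 y| <= L * dX x y)
  (hw_pos : forall x, 0 < w x)
  (hw_lsc : lower_semicontinuous (fun x => (w x)%:E))
  (cbar : R) (hcbar : 0 < cbar)
  (hw_bound : forall x,
     ((`|h1 x|)%:E + ereal_sup (range (fun y => (`|h2fun b f1 f2 y|)%:E))
       + ereal_sup [set (`|c x a|)%:E | a in psi x] <= (cbar * w x)%:E)%E)
  (* (5) *)
  (dbar : R) (hdbar : 0 < dbar)
  (hzw_usc : forall t, (t < T)%N ->
     usc_on [set p : 'rV[R]_m * A | Xs t p.1 /\ psi p.1 p.2]
       (fun p => zeta Xs Q w t p.1 p.2))
  (hzw_bd : forall t x a, (t < T)%N -> Xs t x -> psi x a ->
     (zeta Xs Q w t x a <= (dbar * w x)%:E)%E)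
  (* (6) *)
  (hz_cont : forall (v : 'rV[R]_m -> R), (exists M : R, forall x, `|v x| <= M) ->
     continuous v -> forall t, (t < T)%N ->
     {within [set p : 'rV[R]_m * A | psi p.1 p.2],
       continuous (fun p => zeta Xs Q v t p.1 p.2)})
  (* (7) *)
  (Lq : R) (hLq : 0 < Lq)
  (hz_lip : forall t x a y a', (t < T)%N ->
     Xs t x -> psi x a -> Xs t y -> psi y a' ->
     forall (v : 'rV[R]_m -> R) (Lv : R), 0 <= Lv ->
     (forall x1 x2, `|v x1 - v x2| <= Lv * dX x1 x2) ->
     (`|zeta Xs Q v t x a - zeta Xs Q v t y a'|
        <= (Lq * Lv * (dX x y + dA a a'))%:E)%E)
  (* (8) *)
  (htail : forall theta : R, 0 < theta -> exists Lam : R, forall lam : R, Lam < lam ->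
     (ereal_sup [set z | exists x u, psi x u /\
        z = (\int[Q T.-1 x u]_(y in (Rset lam b : set (stateB R m))) (w y)%:E)%E]
      < theta%:E)%E) :
  let J := cost_to_go Xs psi Q c (fun x => h1 x + h2fun b f1 f2 x) T in
  let Jl := fun lam : R =>
    cost_to_go Xs psi Q c (fun x => h1 x + htilde lam b f1 f2 x) T in
  forall theta : R, 0 < theta -> exists Lam : R, forall lam : R, 0 < lam -> Lam < lam ->
    forall t, (t < T)%N ->
    (ereal_sup [set `|Jl lam t x - J t x| | x in Xs t]
      <= (wnorm w (J T) + wnorm w (Jl lam T)) * theta%:E)%E.
Proof.
move=> J Jl theta th0.
have mw := @w_meas R m w hw_lsc.
have hc : forall x a, psi x a -> `|c x a| <= cbar * w x.
  move=> x a pa; have := hw_bound x.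
  have S20 : (0 <= ereal_sup (range (fun y => (`|h2fun b f1 f2 y|)%:E)))%E.
    apply: le_trans (abse_ge0 (h2fun b f1 f2 x)%:E) _.
    by rewrite abse_EFin; apply: ereal_sup_ubound; exists x.
  have S3c : ((`|c x a|)%:E <= ereal_sup [set (`|c x a0|)%:E | a0 in psi x])%E by apply: ereal_sup_ubound; exists a.
  move=> h; rewrite -lee_fin; apply: le_trans h; apply: le_trans S3c _.
  rewrite -[X in (X <= _)%E]add0e; apply: leeD => //.
  by rewrite adde_ge0 // lee_fin.
have [Lam hLam] := htail theta th0.
exists Lam => lam l0 Llam t tT.
set hJ := fun x => h1 x + h2fun b f1 f2 x.
set hL := fun x => h1 x + htilde lam b f1 f2 x.
have JT y : J T y = (hJ y)%:E by rewrite /J /cost_to_go subnn.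
have LT y : Jl lam T y = (hL y)%:E by rewrite /Jl /cost_to_go subnn.
have wn0 (v : 'rV[R]_m -> \bar R) : (0 <= wnorm w v)%E.
  apply: le_trans (ereal_sup_ubound (ex_intro2 _ _ (0 : 'rV[R]_m) I erefl)).
  by rewrite mule_ge0 // lee_fin invr_ge0 ltW.
have wnb (v : 'rV[R]_m -> \bar R) y : (`|v y| * ((w y)^-1)%:E <= wnorm w v)%E.
  by apply: ereal_sup_ubound; exists y.
have [fK1|nK1] := boolP (wnorm w (J T) \is a fin_num); last first.
  have -> : wnorm w (J T) = +oo%E.
    by move: nK1; rewrite ge0_fin_numE ?wn0 // -leNgt leye_eq => /eqP.
  rewrite addye; last by rewrite gt_eqF // (lt_le_trans _ (wn0 _)) // ltNyr.
  by rewrite gt0_mulye ?lte_fin //; exact: leey.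
have [fK2|nK2] := boolP (wnorm w (Jl lam T) \is a fin_num); last first.
  have -> : wnorm w (Jl lam T) = +oo%E.
    by move: nK2; rewrite ge0_fin_numE ?wn0 // -leNgt leye_eq => /eqP.
  rewrite addey; last by rewrite gt_eqF // (lt_le_trans _ (wn0 _)) // ltNyr.
  by rewrite gt0_mulye ?lte_fin //; exact: leey.
set k1 := fine (wnorm w (J T)); set k2 := fine (wnorm w (Jl lam T)).
have K1E : wnorm w (J T) = k1%:E by rewrite fineK.
have K2E : wnorm w (Jl lam T) = k2%:E by rewrite fineK.
have k10 : 0 <= k1 by rewrite -lee_fin -K1E wn0.
have k20 : 0 <= k2 by rewrite -lee_fin -K2E wn0.
rewrite K1E K2E -EFinD -EFinM.
have hb1 y : `|hJ y| <= k1 * w y.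
  by have := wnb (J T) y; rewrite K1E JT abse_EFin -EFinM lee_fin ler_pdivrMr.
have hb2 y : `|hL y| <= k2 * w y.
  by have := wnb (Jl lam T) y; rewrite K2E LT abse_EFin -EFinM lee_fin ler_pdivrMr.
set K := k1 + k2.
have K0 : 0 <= K by rewrite addr_ge0.
have hbJ y : `|hJ y| <= K * w y.
  apply: le_trans (hb1 y) _; rewrite mulrDl lerDl mulr_ge0 // ltW //.
have hbL y : `|hL y| <= K * w y.
  apply: le_trans (hb2 y) _; rewrite mulrDl lerDr mulr_ge0 // ltW //.
have cs := @ctg_step R m A Xs hXs psi hpsi_ne T Q c w hw_pos mw cbar dbar
  (ltW hcbar) (ltW hdbar) hc hzw_bd hJ hL K K0 hbJ hbL.
have cb := @ctg_bound R m A Xs hXs psi hpsi_ne T Q c w hw_pos mw cbar dbar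
  (ltW hcbar) (ltW hdbar) hc hzw_bd.
have Kt0 : 0 <= K * theta by rewrite mulr_ge0 // ltW.
have D : forall n, (n < T)%N -> forall x, Xs (T - n.+1)%N x ->
    (`|ctg_aux Xs psi Q c hL T n.+1 x - ctg_aux Xs psi Q c hJ T n.+1 x|
      <= (K * theta)%:E)%E.
  elim=> [|n IH] nT.
  - pose Ef := fun y => K * (\1_(Rset lam b) y * w y).
    have mEf : measurable_fun (Xs (T - 0)%N : set (stateB R m)) Ef.
      apply: measurable_funM => //; apply: measurable_funM.
        exact: measurable_indic (@Rset_meas R m lam b l0).
      exact: measurable_funS measurableT (subsetT _) mw.
    have Ef0 y : 0 <= Ef y.
      apply: mulr_ge0 => //; apply: mulr_ge0; [rewrite indicE; exact: ler0n | exact: ltW].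
    have hdiff y : `|hJ y - hL y| <= Ef y.
      have [hR|hR] := pselect (Rset lam b y).
        rewrite /Ef indicE mem_set // mul1r.
        apply: le_trans (ler_normB _ _) _.
        by rewrite /K mulrDl lerD.
      have geq : g_lb lam b y = ind_lt b y by apply: contrapT.
      have -> : hJ y = hL y.
        rewrite /hJ /hL /htilde /h2fun geq /ind_lt; congr (_ + _).
        by case: ifP => _; rewrite ?mulr1 ?subrr ?mulr0 ?addr0 ?mul0r ?subr0 ?add0r ?mulr1.
      by rewrite subrr normr0.
    apply: (cs 0 nT Ef mEf Ef0 (K * theta)).
    + move=> y _ /=; rewrite -EFinD lee_fin.
      by move: (hdiff y); rewrite ler_norml => /andP[? ?]; lra.
    + move=> y _ /=; rewrite -EFinD lee_fin.
      by move: (hdiff y); rewrite ler_norml => /andP[? ?]; lra.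
    + move=> x a _ pa; rewrite /Ef.
      have mIw : measurable_fun (Xs (T - 0)%N : set (stateB R m))
          (fun y => (\1_(Rset lam b) y * w y)).
        apply: measurable_funM.
          exact: measurable_indic (@Rset_meas R m lam b l0).
        exact: measurable_funS measurableT (subsetT _) mw.
      have Iw0 y : 0 <= \1_(Rset lam b) y * w y.
        by apply: mulr_ge0; [rewrite indicE; exact: ler0n | exact: ltW].
      under eq_integral do rewrite EFinM.
      rewrite ge0_integralZl_EFin //; last 2 first.
      * by move=> y _; rewrite lee_fin.
      * exact/measurable_EFinP.
      rewrite EFinM; apply: lee_wpmul2l; first by rewrite lee_fin.
      apply: le_trans (ltW (hLam lam Llam)).
      apply: (@le_trans _ _ (\int[Q T.-1 x a]_(y in (Rset lam b : set (stateB R m))) (w y)%:E)%E); last first.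
        by apply: ereal_sup_ubound; exists x, a; split.
      rewrite subn1 subn0 [X in (X <= _)%E]integral_mkcond [X in (_ <= X)%E]integral_mkcond.
      apply: le_nnint => y _.
        rewrite /patch; case: ifP => _; last exact: lexx.
        by rewrite lee_fin.
      rewrite /patch indicE; case: ifP => _; case: ifP => hR.
      * by rewrite mul1r.
      * by rewrite mul0r.
      * by rewrite lee_fin ltW.
      * exact: lexx.
  - move=> x hx.
    have [MJ [_ bJ]] := cb hJ K K0 hbJ n.+1 (ltnW nT).
    have [ML [_ bL]] := cb hL K K0 hbL n.+1 (ltnW nT).
    have hIH y (hy : Xs (T - n.+1)%N y) :
        (ctg_aux Xs psi Q c hL T n.+1 y <= ctg_aux Xs psi Q c hJ T n.+1 y + (K * theta)%:E)%E /\
        (ctg_aux Xs psi Q c hJ T n.+1 y <= ctg_aux Xs psi Q c hL T n.+1 y + (K * theta)%:E)%E.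
      have hy' : (n.+1 == 0)%N || `[< Xs (T - n.+1)%N y >] by apply/orP; right; exact/asboolP.
      apply: absdiff_inv.
      - by rewrite fin_num_abs (le_lt_trans (bL y hy')) ?ltry.
      - by rewrite fin_num_abs (le_lt_trans (bJ y hy')) ?ltry.
      - exact: IH (ltnW nT) y hy.
    apply: (cs n.+1 nT (fun _ => K * theta) (measurable_cst _) (fun _ => Kt0) (K * theta)); last exact: hx.
    + by move=> y hy; case: (hIH y hy).
    + by move=> y hy; case: (hIH y hy).
    + move=> x' a _ pa.
      rewrite [X in (X <= _)%E](_ : _ = (K * theta)%:E * Q (T - n.+2)%N x' a (Xs (T - n.+1)%N))%E; last exact: integral_cst.
      have eS : ((T - n.+2).+1 = T - n.+1)%N by clear -nT; lia.
      rewrite -eS hQ_supp ?mule1 //; clear -nT; lia.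
apply: ge_ereal_sup => _ [x hx <-].
have e1 : (T - t = (T - t.+1).+1)%N by clear -tT; lia.
have e2 : (T - (T - t.+1).+1 = t)%N by clear -tT; lia.
rewrite /J /Jl /cost_to_go e1.
have nT : (T - t.+1 < T)%N by clear -tT; lia.
by have := D (T - t.+1)%N nT x; rewrite e2; apply.
Qed.
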